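(* For real $\alpha\ne0$ and real $\beta$, let $F_{\alpha,\beta}(x)=\bigl(1+\frac{\alpha}{x}\bigr)^{x+\beta}$, defined for $x>\max\{0,-\alpha\}$ or $x<\min\{0,-\alpha\}$. Then: (1) For $\alpha<0$: $F_{\alpha,\beta}\in\mathcal{C_L}[(-\alpha,\infty)]$ if and only if $\beta\le\alpha$; and $1/F_{\alpha,\beta}\in\mathcal{C_L}[(-\alpha,\infty)]$ if and only if $2\beta\ge\alpha$. (2) For $\alpha>0$: $F_{\alpha,\beta}\in\mathcal{C_L}[(0,\infty)]$ if and only if $2\beta\ge\alpha$; and $1/F_{\alpha,\beta}\in\mathcal{C_L}[(0,\infty)]$ if and only if $\beta\le0$. (3) For $\alpha<0$: $F_{\alpha,\beta}\in\mathcal{A_L}[(-\infty,0)]$ if and only if $\beta\ge0$; and $1/F_{\alpha,\beta}\in\mathcal{A_L}[(-\infty,0)]$ if and only if $2\beta\le\alpha$. (4) For $\alpha>0$: $F_{\alpha,\beta}\in\mathcal{A_L}[(-\infty,-\alpha)]$ if and only if $2\beta\le\alpha$; and $1/F_{\alpha,\beta}\in\mathcal{A_L}[(-\infty,-\alpha)]$ if and only if $\beta\ge\alpha$.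
   Context: For an interval $I$: a positive function $f$ is logarithmically completely monotonic on $I$ if it has derivatives of all orders on $I$ and $(-1)^k[\ln f(x)]^{(k)}\ge0$ for all $x\in I$ and all positive integers $k$; the set of such functions is $\mathcal{C_L}[I]$. A positive function $f$ is logarithmically absolutely monotonic on $I$ if it has derivatives of all orders on $I$ and $[\ln f(x)]^{(k)}\ge0$ for all $x\in I$ and all positive integers $k$; the set of such functions is $\mathcal{A_L}[I]$. *)

(* Defs.v *)
From Stdlib Require Import Reals.
From Coquelicot Require Import Coquelicot.
Open Scope R_scope.

Definition smooth_on (I : R -> Prop) (f : R -> R) : Prop :=
  forall (n : nat) (x : R), I x -> ex_derive_n f n x.

Definition log_completely_monotonic (I : R -> Prop) (f : R -> R) : Prop :=
  (forall x, I x -> 0 < f x) /\ smooth_on I f /\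
  forall (k : nat) (x : R), (1 <= k)%nat -> I x ->
    0 <= (-1) ^ k * Derive_n (fun y => ln (f y)) k x.

Definition log_absolutely_monotonic (I : R -> Prop) (f : R -> R) : Prop :=
  (forall x, I x -> 0 < f x) /\ smooth_on I f /\
  forall (k : nat) (x : R), (1 <= k)%nat -> I x ->
    0 <= Derive_n (fun y => ln (f y)) k x.

Definition F (alpha beta : R) (x : R) : R := Rpower (1 + alpha / x) (x + beta).

(* Main.v *)
Require Import Defs.
From Stdlib Require Import Reals Lra Lia Psatz.
From Coquelicot Require Import Coquelicot.
Open Scope R_scope.

Lemma Dn_ext (U : R -> Prop) (HU : open U) (f g : R -> R) :
  (forall t, U t -> f t = g t) -> forall n t, U t -> Derive_n f n t = Derive_n g n t.
Proof.
  intros H n t Ht. apply Derive_n_ext_loc.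
  generalize (HU t Ht). apply filter_imp. intros; auto.
Qed.

Definition SmN (U : R -> Prop) (n : nat) (h : R -> R) :=
  forall m, (m <= n)%nat -> forall x, U x -> ex_derive (Derive_n h m) x.

Lemma SmN_ext U (HU : open U) n f g :
  (forall t, U t -> f t = g t) -> SmN U n f -> SmN U n g.
Proof.
  intros H Hf m Hm x Hx.
  apply ex_derive_ext_loc with (Derive_n f m).
  - generalize (HU x Hx). apply filter_imp. intros t Ht. apply (Dn_ext U); auto.
  - apply Hf; auto.
Qed.

Lemma Dn_S h n t : Derive_n h (S n) t = Derive_n (Derive h) n t.
Proof.
  rewrite <- Nat.add_1_r. rewrite <- (Derive_n_comp h n 1). reflexivity.
Qed.

Lemma SmN_of_deriv U (HU : open U) n f f' :
  (forall x, U x -> is_derive f x (f' x)) -> SmN U n f' -> SmN U (S n) f.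
Proof.
  intros Hd Hf m Hm x Hx. destruct m as [|m].
  - simpl. exists (f' x). apply Hd; auto.
  - apply ex_derive_ext_loc with (Derive_n f' m).
    + generalize (HU x Hx). apply filter_imp. intros t Ht.
      rewrite Dn_S. symmetry. apply (Dn_ext U); auto.
      intros s Hs. apply is_derive_unique. apply Hd; auto.
    + apply Hf; auto. lia.
Qed.

Lemma SmN_deriv U n f : SmN U (S n) f -> SmN U n (Derive f).
Proof.
  intros Hf m Hm x Hx.
  apply ex_derive_ext with (Derive_n f (S m)).
  - intros t. apply Dn_S.
  - apply Hf; auto. lia.
Qed.

Lemma SmN_le U n m f : SmN U n f -> (m <= n)%nat -> SmN U m f.
Proof. intros H Hm k Hk. apply H. lia. Qed.

Lemma SmN_0 U f : (forall x, U x -> ex_derive f x) -> SmN U 0 f.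
Proof. intros H m Hm x Hx. assert (m = 0)%nat by lia. subst. simpl. apply H; auto. Qed.

Lemma SmN_ex U n f x : SmN U n f -> U x -> ex_derive f x.
Proof. intros H Hx. apply (H 0%nat); auto. lia. Qed.

Lemma SmN_plus U (HU : open U) n : forall f g,
  SmN U n f -> SmN U n g -> SmN U n (fun x => f x + g x).
Proof.
  induction n as [|n IH]; intros f g Hf Hg.
  - apply SmN_0. intros x Hx. apply (ex_derive_plus f g x); eapply SmN_ex; eauto.
  - apply SmN_of_deriv with (fun x => Derive f x + Derive g x); auto.
    + intros x Hx. apply (is_derive_plus f g x); apply Derive_correct; eapply SmN_ex; eauto.
    + apply IH; apply SmN_deriv; auto.
Qed.

Lemma SmN_mult U (HU : open U) n : forall f g,
  SmN U n f -> SmN U n g -> SmN U n (fun x => f x * g x).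
Proof.
  induction n as [|n IH]; intros f g Hf Hg.
  - apply SmN_0. intros x Hx. apply (ex_derive_mult f g x); eapply SmN_ex; eauto.
  - apply SmN_of_deriv with (fun x => Derive f x * g x + f x * Derive g x); auto.
    + intros x Hx. apply (is_derive_mult f g x).
      apply Derive_correct; apply (SmN_ex U (S n) f x Hf Hx).
      apply Derive_correct; apply (SmN_ex U (S n) g x Hg Hx).
      intros; apply Rmult_comm.
    + apply SmN_plus; auto.
      * apply IH. apply SmN_deriv; auto. apply (SmN_le U (S n) n g Hg); lia.
      * apply IH. apply (SmN_le U (S n) n f Hf); lia. apply SmN_deriv; auto.
Qed.

Lemma SmN_const U n c : SmN U n (fun _ => c).
Proof. intros m Hm x Hx. apply (ex_derive_n_const c (S m) x). Qed.

Lemma SmN_exp U (HU : open U) L (HL : forall n, SmN U n L) : forall n a,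
  SmN U n a -> SmN U n (fun x => a x * exp (L x)).
Proof.
  induction n as [|n IH]; intros a Ha.
  - apply SmN_0. intros x Hx.
    assert (Ea : ex_derive a x) by (apply (SmN_ex U 0 a x Ha Hx)).
    assert (EL : ex_derive L x) by (apply (SmN_ex U 0 L x (HL 0%nat) Hx)).
    exists (Derive a x * exp (L x) + a x * (Derive L x * exp (L x))).
    auto_derive; auto. change (Derive (fun x0 => a x0)) with (Derive a).
      change (Derive (fun x0 => L x0)) with (Derive L). simpl. ring.
  - apply SmN_of_deriv with (fun x => (Derive a x + a x * Derive L x) * exp (L x)); auto.
    + intros x Hx.
      assert (Ea : ex_derive a x) by (apply (SmN_ex U (S n) a x Ha Hx)).
      assert (EL : ex_derive L x) by (apply (SmN_ex U 0 L x (HL 0%nat) Hx)).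
      auto_derive; auto. change (Derive (fun x0 => a x0)) with (Derive a).
      change (Derive (fun x0 => L x0)) with (Derive L). simpl. ring.
    + apply IH. apply SmN_plus; auto. apply SmN_deriv; auto.
      apply SmN_mult; auto. apply (SmN_le U (S n) n a Ha); lia.
      apply SmN_deriv; auto.
Qed.
Definition Gf (a : R) (k : nat) (x : R) : R :=
  match k with
  | O => ln (1 + a / x)
  | S j => (-1) ^ j * INR (Factorial.fact j) * (/ (x + a) ^ (S j) - / x ^ (S j))
  end.

Definition Phi (a b : R) (k : nat) (x : R) : R :=
  (x + b) * Gf a k x + INR k * Gf a (pred k) x.

Lemma is_derive_invpow (c : R) (n : nat) (x : R) : x + c <> 0 ->
  is_derive (fun t => / (t + c) ^ (S n)) x (- INR (S n) * / (x + c) ^ (S (S n))).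
Proof.
  intros H. assert (Hp : (x + c) ^ n <> 0) by (apply pow_nonzero; auto).
  auto_derive.
  - simpl. intro H'. apply Rmult_integral in H'. destruct H' as [H'|H']; auto.
  - simpl pow. change (match n with 0%nat => 1 | S _ => INR n + 1 end) with (INR (S n)). field. auto.
Qed.

Lemma Gf_deriv a k x : 0 < x * (x + a) ->
  is_derive (Gf a k) x (Gf a (S k) x).
Proof.
  intros Hd.
  assert (Hx : x <> 0) by (intro; subst; nra).
  assert (Hxa : x + a <> 0) by (intro H; rewrite H in Hd; nra).
  assert (Hpos : 0 < 1 + a / x).
  { replace (1 + a / x) with (x * (x + a) / (x * x)) by (field; auto).
    apply Rdiv_lt_0_compat; nra. }
  destruct k as [|j].
  - change (Gf a 0) with (fun t => ln (1 + a / t)). unfold Gf. auto_derive.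
    + repeat split; auto. unfold Rdiv in Hpos; auto.
    + simpl. field. split; auto.

  - unfold Gf. auto_derive.
    + repeat split; try apply Rmult_integral_contrapositive; try split; try apply pow_nonzero; auto.
    + change (Factorial.fact (S j)) with (S j * Factorial.fact j)%nat; rewrite mult_INR.
      simpl pow. change (match j with 0%nat => 1 | S _ => INR j + 1 end) with (INR (S j)).
      field. repeat split; try apply pow_nonzero; auto.
Qed.

Lemma Phi_deriv a b k x : 0 < x * (x + a) ->
  is_derive (Phi a b k) x (Phi a b (S k) x).
Proof.
  intros Hd. unfold Phi.
  destruct k as [|k].
  - simpl pred. 
    replace ((x + b) * Gf a 1 x + INR 1 * Gf a 0 x) with
      ((1 * Gf a 0 x + (x + b) * Gf a 1 x) + INR 0 * Gf a 1 x) by (simpl; ring).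
    apply (is_derive_plus (fun t => (t+b) * Gf a 0 t) (fun t => INR 0 * Gf a 0 t)).
    + apply (is_derive_mult (fun t => t + b) (Gf a 0)).
      * auto_derive; auto; ring.
      * apply Gf_deriv; auto.
      * intros; apply Rmult_comm.
    + apply is_derive_scal. apply Gf_deriv; auto.
  - simpl pred.
    replace ((x + b) * Gf a (S (S k)) x + INR (S (S k)) * Gf a (S k) x) with
      ((1 * Gf a (S k) x + (x + b) * Gf a (S (S k)) x) + INR (S k) * Gf a (S k) x) by (rewrite (S_INR (S k)); ring).
    apply (is_derive_plus (fun t => (t+b) * Gf a (S k) t) (fun t => INR (S k) * Gf a k t)).
    + apply (is_derive_mult (fun t => t + b) (Gf a (S k))).
      * auto_derive; auto; ring.
      * apply Gf_deriv; auto.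
      * intros; apply Rmult_comm.
    + apply is_derive_scal. apply Gf_deriv; auto.
Qed.

Definition Lf (a b : R) (x : R) : R := (x + b) * ln (1 + a / x).

Lemma DnL U (HU : open U) a b (Hd : forall x, U x -> 0 < x * (x + a)) :
  forall k t, U t -> Derive_n (Lf a b) k t = Phi a b k t.
Proof.
  induction k as [|k IH]; intros t Ht.
  - simpl. unfold Phi, Lf. simpl. ring.
  - simpl. rewrite (Derive_ext_loc _ (Phi a b k)).
    + apply is_derive_unique. apply Phi_deriv; auto.
    + generalize (HU t Ht). apply filter_imp. intros s Hs. apply IH; auto.
Qed.

Lemma SmL U (HU : open U) a b (Hd : forall x, U x -> 0 < x * (x + a)) :
  forall n, SmN U n (Lf a b).
Proof.
  intros n m Hm x Hx.
  apply ex_derive_ext_loc with (Phi a b m).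
  - generalize (HU x Hx). apply filter_imp. intros s Hs. symmetry. apply (DnL U); auto.
  - exists (Phi a b (S m) x). apply Phi_deriv; auto.
Qed.

Lemma lnF_eq a b y : ln (F a b y) = Lf a b y.
Proof. unfold F, Rpower, Lf. apply ln_exp. Qed.

Lemma lniF_eq a b y : ln (/ F a b y) = - Lf a b y.
Proof. rewrite ln_Rinv. rewrite lnF_eq; auto. unfold F, Rpower. apply exp_pos. Qed.

Lemma smooth_F U (HU : open U) a b (Hd : forall x, U x -> 0 < x * (x + a)) :
  smooth_on U (F a b).
Proof.
  intros n x Hx. destruct n as [|n]; [exact I|]. simpl.
  assert (H : SmN U n (fun x => 1 * exp (Lf a b x))).
  { apply SmN_exp; auto. apply SmL; auto. apply SmN_const. }
  apply (SmN_ext U HU n _ (F a b)) in H.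
  - apply (H n); auto.
  - intros t Ht. unfold F, Rpower, Lf. ring.
Qed.

Lemma smooth_iF U (HU : open U) a b (Hd : forall x, U x -> 0 < x * (x + a)) :
  smooth_on U (fun x => / F a b x).
Proof.
  intros n x Hx. destruct n as [|n]; [exact I|]. simpl.
  assert (HL : forall n, SmN U n (fun x => - Lf a b x)).
  { intros k. apply (SmN_ext U HU k (fun x => (-1) * Lf a b x)).
    intros; ring. apply SmN_mult; auto. apply SmN_const. apply SmL; auto. }
  assert (H : SmN U n (fun x => 1 * exp (- Lf a b x))).
  { apply (SmN_exp U HU _ HL). apply SmN_const. }
  apply (SmN_ext U HU n _ (fun x => / F a b x)) in H.
  - apply (H n); auto.
  - intros t Ht. unfold F, Rpower, Lf. rewrite exp_Ropp. ring.
Qed.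

Lemma DnlnF U (HU : open U) a b (Hd : forall x, U x -> 0 < x * (x + a)) k x :
  U x -> Derive_n (fun y => ln (F a b y)) k x = Phi a b k x.
Proof.
  intros Hx. rewrite (Derive_n_ext _ (Lf a b)). apply (DnL U); auto.
  intros; apply lnF_eq.
Qed.

Lemma DnlniF U (HU : open U) a b (Hd : forall x, U x -> 0 < x * (x + a)) k x :
  U x -> Derive_n (fun y => ln (/ F a b y)) k x = - Phi a b k x.
Proof.
  intros Hx. rewrite (Derive_n_ext _ (fun y => - Lf a b y)).
  rewrite Derive_n_opp. f_equal. apply (DnL U); auto.
  intros; apply lniF_eq.
Qed.

Lemma F_pos a b x : 0 < F a b x.
Proof. unfold F, Rpower. apply exp_pos. Qed.

Lemma char_CM_F U (HU : open U) a b (Hd : forall x, U x -> 0 < x * (x + a)) :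
  log_completely_monotonic U (F a b) <->
  (forall k x, (1 <= k)%nat -> U x -> 0 <= (-1) ^ k * Phi a b k x).
Proof.
  split.
  - intros [_ [_ H]] k x Hk Hx. rewrite <- (DnlnF U HU a b Hd); auto.
  - intros H. split; [intros; apply F_pos|]. split; [apply smooth_F; auto|].
    intros k x Hk Hx. rewrite (DnlnF U HU a b Hd); auto.
Qed.

Lemma char_CM_iF U (HU : open U) a b (Hd : forall x, U x -> 0 < x * (x + a)) :
  log_completely_monotonic U (fun x => / F a b x) <->
  (forall k x, (1 <= k)%nat -> U x -> 0 <= (-1) ^ k * - Phi a b k x).
Proof.
  split.
  - intros [_ [_ H]] k x Hk Hx. rewrite <- (DnlniF U HU a b Hd); auto.
  - intros H. split; [intros; apply Rinv_0_lt_compat, F_pos|]. split; [apply smooth_iF; auto|].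
    intros k x Hk Hx. rewrite (DnlniF U HU a b Hd); auto.
Qed.

Lemma char_AM_F U (HU : open U) a b (Hd : forall x, U x -> 0 < x * (x + a)) :
  log_absolutely_monotonic U (F a b) <->
  (forall k x, (1 <= k)%nat -> U x -> 0 <= Phi a b k x).
Proof.
  split.
  - intros [_ [_ H]] k x Hk Hx. rewrite <- (DnlnF U HU a b Hd); auto.
  - intros H. split; [intros; apply F_pos|]. split; [apply smooth_F; auto|].
    intros k x Hk Hx. rewrite (DnlnF U HU a b Hd); auto.
Qed.

Lemma char_AM_iF U (HU : open U) a b (Hd : forall x, U x -> 0 < x * (x + a)) :
  log_absolutely_monotonic U (fun x => / F a b x) <->
  (forall k x, (1 <= k)%nat -> U x -> 0 <= - Phi a b k x).
Proof.
  split.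
  - intros [_ [_ H]] k x Hk Hx. rewrite <- (DnlniF U HU a b Hd); auto.
  - intros H. split; [intros; apply Rinv_0_lt_compat, F_pos|]. split; [apply smooth_iF; auto|].
    intros k x Hk Hx. rewrite (DnlniF U HU a b Hd); auto.
Qed.
Definition Qc (n : nat) (p q b : R) : R :=
  p * q ^ (S n) - q * p ^ (S n) + INR n * (b * (p ^ (S n) - q ^ (S n)) + (p - q) * q ^ (S n)).

Definition Bn (n : nat) (p q : R) : R :=
  p ^ (S n) - INR (S n) * p * q ^ n + INR n * q ^ (S n).

Definition En (n : nat) (p q : R) : R :=
  INR n * (p - q) * (p ^ (S n) + q ^ (S n)) - 2 * p * q * (p ^ n - q ^ n).

Lemma Bn_S n p q : Bn (S n) p q = p * Bn n p q + INR (S n) * q ^ n * (p - q) ^ 2.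
Proof. unfold Bn. rewrite !S_INR. simpl. ring. Qed.

Lemma Bn_nonneg n p q : 0 <= p -> 0 <= q -> 0 <= Bn n p q.
Proof.
  intros Hp Hq. induction n as [|n IH].
  - unfold Bn. simpl. lra.
  - rewrite Bn_S. apply Rplus_le_le_0_compat.
    + apply Rmult_le_pos; auto.
    + apply Rmult_le_pos; [apply Rmult_le_pos|]; [apply pos_INR| apply pow_le; auto| apply pow2_ge_0].
Qed.

Lemma En_S n p q : En (S n) p q = p * En n p q + (p - q) * Bn (S n) p q.
Proof. unfold En, Bn. rewrite !S_INR. simpl. ring. Qed.

Lemma En_sign n p q : 0 <= p -> 0 <= q -> 0 <= (p - q) * En n p q.
Proof.
  intros Hp Hq. induction n as [|n IH].
  - unfold En. simpl. lra.
  - rewrite En_S.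
    replace ((p - q) * (p * En n p q + (p - q) * Bn (S n) p q)) with
      (p * ((p - q) * En n p q) + (p - q) ^ 2 * Bn (S n) p q) by ring.
    apply Rplus_le_le_0_compat; apply Rmult_le_pos; auto.
    apply pow2_ge_0. apply Bn_nonneg; auto.
Qed.

Lemma Qc_lin n p q b b0 : Qc n p q b = Qc n p q b0 + INR n * (b - b0) * (p ^ (S n) - q ^ (S n)).
Proof. unfold Qc. ring. Qed.

Lemma Qc_half n p q : 2 * Qc n p q ((p - q) / 2) = En n p q.
Proof. unfold Qc, En. simpl. field. Qed.

Lemma Qc_diff n p q : Qc n p q (p - q) = p * Bn n q p.
Proof. unfold Qc, Bn. rewrite S_INR. simpl. ring. Qed.

Lemma Qc_zero n p q : Qc n p q 0 = - q * Bn n p q.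
Proof. unfold Qc, Bn. rewrite S_INR. simpl. ring. Qed.

Lemma pow_le_lt p q n : 0 < p -> p < q -> p ^ n <= q ^ n.
Proof. intros. apply pow_incr. lra. Qed.

Lemma core_i n p q b : 0 < p -> p < q -> b <= p - q -> 0 <= Qc n p q b.
Proof.
  intros Hp Hpq Hb. rewrite (Qc_lin n p q b (p - q)). rewrite Qc_diff.
  assert (H1 := Bn_nonneg n q p ltac:(lra) ltac:(lra)).
  assert (H2 := pow_le_lt p q (S n) Hp Hpq).
  assert (H3 := pos_INR n).
  assert (0 <= p * Bn n q p) by (apply Rmult_le_pos; lra).
  assert (0 <= INR n * (b - (p - q)) * (p ^ S n - q ^ S n)).
  { replace (INR n * (b - (p - q)) * (p ^ S n - q ^ S n)) with
      (INR n * ((p - q - b) * (q ^ S n - p ^ S n))) by ring.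
    apply Rmult_le_pos; auto. apply Rmult_le_pos; lra. }
  lra.
Qed.

Lemma core_ii n p q b : 0 < p -> p < q -> p - q <= 2 * b -> Qc n p q b <= 0.
Proof.
  intros Hp Hpq Hb. rewrite (Qc_lin n p q b ((p - q) / 2)).
  assert (H1 := En_sign n p q ltac:(lra) ltac:(lra)).
  assert (H1' : En n p q <= 0) by nra.
  assert (H0 := Qc_half n p q).
  assert (H2 := pow_le_lt p q (S n) Hp Hpq).
  assert (H3 := pos_INR n).
  assert (0 <= INR n * ((b - (p - q) / 2) * (q ^ S n - p ^ S n))).
  { apply Rmult_le_pos; auto. apply Rmult_le_pos; lra. }
  nra.
Qed.

Lemma core_iii n p q b : 0 < q -> q < p -> p - q <= 2 * b -> 0 <= Qc n p q b.
Proof.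
  intros Hq Hpq Hb. rewrite (Qc_lin n p q b ((p - q) / 2)).
  assert (H1 := En_sign n p q ltac:(lra) ltac:(lra)).
  assert (H1' : 0 <= En n p q) by nra.
  assert (H0 := Qc_half n p q).
  assert (H2 := pow_le_lt q p (S n) Hq Hpq).
  assert (H3 := pos_INR n).
  assert (0 <= INR n * ((b - (p - q) / 2) * (p ^ S n - q ^ S n))).
  { apply Rmult_le_pos; auto. apply Rmult_le_pos; lra. }
  nra.
Qed.

Lemma core_iv n p q b : 0 < q -> q < p -> b <= 0 -> Qc n p q b <= 0.
Proof.
  intros Hq Hpq Hb. rewrite (Qc_lin n p q b 0). rewrite Qc_zero.
  assert (H1 := Bn_nonneg n p q ltac:(lra) ltac:(lra)).
  assert (H2 := pow_le_lt q p (S n) Hq Hpq).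
  assert (H3 := pos_INR n).
  assert (0 <= q * Bn n p q) by (apply Rmult_le_pos; lra).
  assert (0 <= INR n * ((0 - b) * (p ^ S n - q ^ S n))).
  { apply Rmult_le_pos; auto. apply Rmult_le_pos; lra. }
  nra.
Qed.

Lemma pow_opp p n : (- p) ^ n = (-1) ^ n * p ^ n.
Proof. rewrite <- Rpow_mult_distr. f_equal. ring. Qed.

Lemma Qc_neg n p q b : Qc n (- p) (- q) b = (-1) ^ n * Qc n p q (- b).
Proof. unfold Qc. rewrite !pow_opp. simpl. ring. Qed.
Lemma ln_le_m1 y : 0 < y -> ln y <= y - 1.
Proof. intros Hy. assert (H := exp_ineq1_le (ln y)). rewrite exp_ln in H; auto. lra. Qed.

Lemma ln_ge_m1 y : 0 < y -> 1 - / y <= ln y.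
Proof.
  intros Hy. assert (H := ln_le_m1 (/ y) (Rinv_0_lt_compat _ Hy)).
  rewrite ln_Rinv in H; auto. lra.
Qed.

Definition hh (y : R) := ln y - (y - / y) / 2.

Lemma hh_deriv c : 0 < c -> derivable_pt_lim hh c (- (c - 1) ^ 2 / (2 * c * c)).
Proof.
  intros Hc. apply is_derive_Reals. unfold hh. auto_derive.
  - repeat split; lra.
  - field. lra.
Qed.

Lemma hh_ge1 y : 1 <= y -> hh y <= 0.
Proof.
  intros Hy. destruct (Req_dec y 1) as [->|Hne].
  - unfold hh. rewrite ln_1. replace (/1) with 1 by field. lra.
  - destruct (MVT_cor2 hh (fun c => - (c - 1) ^ 2 / (2 * c * c)) 1 y) as [c [Hc1 Hc2]].
    + lra.
    + intros c Hc. apply hh_deriv. lra.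
    + assert (hh 1 = 0) by (unfold hh; rewrite ln_1; field).
      assert (0 <= (c - 1) ^ 2 / (2 * c * c)).
      { apply Rmult_le_pos. apply pow2_ge_0. apply Rlt_le, Rinv_0_lt_compat. nra. }
      assert (Hm : hh y = - ((c - 1) ^ 2 / (2 * c * c)) * (y - 1)) by (replace (hh y) with (hh y - hh 1) by lra; rewrite Hc1; unfold Rdiv; ring).
      rewrite Hm. nra.
Qed.

Lemma hh_le1 y : 0 < y -> y <= 1 -> 0 <= hh y.
Proof.
  intros Hy0 Hy. destruct (Req_dec y 1) as [->|Hne].
  - unfold hh. rewrite ln_1. replace (/1) with 1 by field. lra.
  - destruct (MVT_cor2 hh (fun c => - (c - 1) ^ 2 / (2 * c * c)) y 1) as [c [Hc1 Hc2]].
    + lra.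
    + intros c Hc. apply hh_deriv. lra.
    + assert (hh 1 = 0) by (unfold hh; rewrite ln_1; field).
      assert (0 <= (c - 1) ^ 2 / (2 * c * c)).
      { apply Rmult_le_pos. apply pow2_ge_0. apply Rlt_le, Rinv_0_lt_compat. nra. }
      assert (Hm : hh y = ((c - 1) ^ 2 / (2 * c * c)) * (1 - y)).
      { replace (hh y) with (- (hh 1 - hh y)) by lra. rewrite Hc1. unfold Rdiv; ring. }
      rewrite Hm. nra.
Qed.

Lemma lin_right a b x0 : 0 < a * x0 + b -> exists x, x0 < x /\ 0 < a * x + b.
Proof.
  intros H. remember (a * x0 + b) as c eqn:Hc.
  exists (x0 + c / (2 * (a * a + 1))). split.
  - assert (0 < c / (2 * (a * a + 1))) by (apply Rdiv_lt_0_compat; nra). lra.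
  - replace (a * (x0 + c / (2 * (a * a + 1))) + b) with (c * (2 * a * a + 2 + a) / (2 * (a * a + 1)))
      by (rewrite Hc; field; apply Rgt_not_eq; nra).
    apply Rdiv_lt_0_compat; [apply Rmult_lt_0_compat; [lra| nra] | nra].
Qed.

Lemma lin_left a b x0 : 0 < a * x0 + b -> exists x, x < x0 /\ 0 < a * x + b.
Proof.
  intros H. remember (a * x0 + b) as c eqn:Hc.
  exists (x0 - c / (2 * (a * a + 1))). split.
  - assert (0 < c / (2 * (a * a + 1))) by (apply Rdiv_lt_0_compat; nra). lra.
  - replace (a * (x0 - c / (2 * (a * a + 1))) + b) with (c * (2 * a * a + 2 - a) / (2 * (a * a + 1)))
      by (rewrite Hc; field; apply Rgt_not_eq; nra).
    apply Rdiv_lt_0_compat; [apply Rmult_lt_0_compat; [lra| nra] | nra].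
Qed.

Lemma lin_large a b x0 : a < 0 -> exists x, x0 < x /\ a * x + b < 0.
Proof.
  intros H. remember (a * x0 + b) as c eqn:Hc.
  exists (x0 + (c * c + 1) / (- a)). split.
  - assert (0 < (c * c + 1) / (- a)) by (apply Rdiv_lt_0_compat; nra). lra.
  - replace (a * (x0 + (c * c + 1) / (- a)) + b) with (c - c * c - 1) by (rewrite Hc; field; first [apply Rgt_not_eq; lra | apply Rlt_not_eq; lra]).
    nra.
Qed.

Lemma lin_small a b x0 : 0 < a -> exists x, x < x0 /\ a * x + b < 0.
Proof.
  intros H. remember (a * x0 + b) as c eqn:Hc.
  exists (x0 - (c * c + 1) / a). split.
  - assert (0 < (c * c + 1) / a) by (apply Rdiv_lt_0_compat; nra). lra.
  - replace (a * (x0 - (c * c + 1) / a) + b) with (c - c * c - 1) by (rewrite Hc; field; first [apply Rgt_not_eq; lra | apply Rlt_not_eq; lra]).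
    nra.
Qed.

Lemma dom_facts a x : 0 < x * (x + a) -> x <> 0 /\ x + a <> 0 /\ 0 < 1 + a / x.
Proof.
  intros Hd.
  assert (Hx : x <> 0) by (intro; subst; nra).
  assert (Hxa : x + a <> 0) by (intro H; rewrite H in Hd; nra).
  split; auto. split; auto.
  replace (1 + a / x) with (x * (x + a) / (x * x)) by (field; auto).
  apply Rdiv_lt_0_compat; nra.
Qed.

Lemma Phi2_eq a b x : 0 < x * (x + a) ->
  Phi a b 2 x = a * ((2 * b - a) * x + a * b) / (x * (x + a)) ^ 2.
Proof.
  intros Hd. destruct (dom_facts a x Hd) as [Hx [Hxa _]].
  unfold Phi, Gf. simpl. field. auto.
Qed.

Lemma PhiSS_eq a b j x : 0 < x * (x + a) ->
  Phi a b (S (S j)) x = (-1) ^ j * INR (Factorial.fact j) * Qc (S j) (x + a) x b / (x * (x + a)) ^ (S (S j)).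
Proof.
  intros Hd. destruct (dom_facts a x Hd) as [Hx [Hxa _]].
  assert (Hp1 : x ^ j <> 0) by (apply pow_nonzero; auto).
  assert (Hp2 : (x + a) ^ j <> 0) by (apply pow_nonzero; auto).
  unfold Phi, Gf, Qc. simpl pred. rewrite Rpow_mult_distr.
  change (Factorial.fact (S j)) with (S j * Factorial.fact j)%nat; rewrite mult_INR.
  rewrite !S_INR. simpl pow. field. repeat split; auto.
Qed.

Lemma Phi1_a a b x : 0 < x * (x + a) ->
  Phi a b 1 x = ln (1 + a / x) - ((1 + a / x) - 1) - a * (b - a) / (x * (x + a)).
Proof.
  intros Hd. destruct (dom_facts a x Hd) as [Hx [Hxa _]].
  unfold Phi, Gf. simpl. field. auto.
Qed.

Lemma Phi1_0 a b x : 0 < x * (x + a) ->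
  Phi a b 1 x = ln (1 + a / x) - (1 - / (1 + a / x)) - a * b / (x * (x + a)).
Proof.
  intros Hd. destruct (dom_facts a x Hd) as [Hx [Hxa Hy]].
  unfold Phi, Gf. simpl. assert (1 + a / x <> 0) by lra. field. repeat split; auto.
Qed.

Lemma Phi1_h a b x : 0 < x * (x + a) ->
  Phi a b 1 x = hh (1 + a / x) - a * (b - a / 2) / (x * (x + a)).
Proof.
  intros Hd. destruct (dom_facts a x Hd) as [Hx [Hxa Hy]].
  unfold Phi, Gf, hh. simpl. assert (1 + a / x <> 0) by lra. field. repeat split; auto.
Qed.

Lemma m1sq j : (-1) ^ j * (-1) ^ j = 1.
Proof. rewrite <- Rpow_mult_distr. replace (-1 * -1) with 1 by ring. apply pow1. Qed.

Lemma CM_SS a b j x : 0 < x * (x + a) ->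
  (-1) ^ (S (S j)) * Phi a b (S (S j)) x =
  INR (Factorial.fact j) * Qc (S j) (x + a) x b / (x * (x + a)) ^ (S (S j)).
Proof.
  intros Hd. rewrite PhiSS_eq; auto.
  replace ((-1) ^ S (S j)) with ((-1) ^ j * (-1) ^ j * (-1) ^ (S (S j))) by (rewrite m1sq; ring).
  simpl ((-1) ^ S (S j)). unfold Rdiv.
  replace ((-1) ^ j * (-1) ^ j * (-1 * (-1 * (-1) ^ j)) *
      ((-1) ^ j * INR (Factorial.fact j) * Qc (S j) (x + a) x b * / (x * (x + a)) ^ S (S j)))
    with (((-1) ^ j * (-1) ^ j) * ((-1) ^ j * (-1) ^ j) *
      (INR (Factorial.fact j) * Qc (S j) (x + a) x b * / (x * (x + a)) ^ S (S j))) by ring.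
  rewrite m1sq. ring.
Qed.

Lemma AM_SS a b j x : 0 < x * (x + a) ->
  Phi a b (S (S j)) x =
  - (INR (Factorial.fact j) * Qc (S j) (- (x + a)) (- x) (- b) / (x * (x + a)) ^ (S (S j))).
Proof.
  intros Hd. rewrite PhiSS_eq; auto.
  assert (H := Qc_neg (S j) (- (x + a)) (- x) b). rewrite !Ropp_involutive in H.
  rewrite H. simpl ((-1) ^ S j). unfold Rdiv.
  replace ((-1) ^ j * INR (Factorial.fact j) * (-1 * (-1) ^ j * Qc (S j) (- (x + a)) (- x) (- b)) *
     / (x * (x + a)) ^ S (S j)) with
    (- ((-1) ^ j * (-1) ^ j) * (INR (Factorial.fact j) * Qc (S j) (- (x + a)) (- x) (- b) *
     / (x * (x + a)) ^ S (S j))) by ring.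
  rewrite m1sq. ring.
Qed.

Lemma divpos N P : 0 <= N -> 0 < P -> 0 <= N / P.
Proof. intros. unfold Rdiv. apply Rmult_le_pos; auto. apply Rlt_le, Rinv_0_lt_compat; auto. Qed.

Lemma divneg N P : N <= 0 -> 0 < P -> N / P <= 0.
Proof. intros. assert (0 <= - N / P) by (apply divpos; lra). unfold Rdiv in *. lra. Qed.

Lemma sgn_pos j Q P : 0 <= Q -> 0 < P -> 0 <= INR (Factorial.fact j) * Q / P.
Proof. intros. apply divpos; auto. apply Rmult_le_pos; auto. apply pos_INR. Qed.

Lemma sgn_neg j Q P : Q <= 0 -> 0 < P -> INR (Factorial.fact j) * Q / P <= 0.
Proof. intros. apply divneg; auto. assert (0 <= INR (Factorial.fact j)) by apply pos_INR. nra. Qed.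

Lemma Ppos a x j : 0 < x * (x + a) -> 0 < (x * (x + a)) ^ j.
Proof. intros; apply pow_lt; auto. Qed.

Lemma Phi2_bad a b x : 0 < x * (x + a) -> a * ((2 * b - a) * x + a * b) < 0 -> Phi a b 2 x < 0.
Proof.
  intros Hd H. rewrite Phi2_eq; auto. unfold Rdiv.
  assert (0 < / (x * (x + a)) ^ 2) by (apply Rinv_0_lt_compat, Ppos; auto). nra.
Qed.

Lemma Phi2_bad' a b x : 0 < x * (x + a) -> 0 < a * ((2 * b - a) * x + a * b) -> 0 < Phi a b 2 x.
Proof.
  intros Hd H. rewrite Phi2_eq; auto. unfold Rdiv.
  assert (0 < / (x * (x + a)) ^ 2) by (apply Rinv_0_lt_compat, Ppos; auto). nra.
Qed.

Lemma y_lt1 a x : 0 < x * (x + a) -> a * x < 0 -> 1 + a / x < 1.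
Proof.
  intros Hd H. destruct (dom_facts a x Hd) as [Hx _].
  replace (a / x) with (a * x * / (x * x)) by (field; auto).
  assert (0 < / (x * x)) by (apply Rinv_0_lt_compat; nra). nra.
Qed.

Lemma y_gt1 a x : 0 < x * (x + a) -> 0 < a * x -> 1 < 1 + a / x.
Proof.
  intros Hd H. destruct (dom_facts a x Hd) as [Hx _].
  replace (a / x) with (a * x * / (x * x)) by (field; auto).
  assert (0 < / (x * x)) by (apply Rinv_0_lt_compat; nra). nra.
Qed.

Theorem theorem1p2 (alpha beta : R) (Ha : alpha <> 0) :
  (alpha < 0 ->
     (log_completely_monotonic (fun x => - alpha < x) (F alpha beta) <-> beta <= alpha) /\
     (log_completely_monotonic (fun x => - alpha < x) (fun x => / F alpha beta x)
        <-> alpha <= 2 * beta)) /\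
  (0 < alpha ->
     (log_completely_monotonic (fun x => 0 < x) (F alpha beta) <-> alpha <= 2 * beta) /\
     (log_completely_monotonic (fun x => 0 < x) (fun x => / F alpha beta x)
        <-> beta <= 0)) /\
  (alpha < 0 ->
     (log_absolutely_monotonic (fun x => x < 0) (F alpha beta) <-> 0 <= beta) /\
     (log_absolutely_monotonic (fun x => x < 0) (fun x => / F alpha beta x)
        <-> 2 * beta <= alpha)) /\
  (0 < alpha ->
     (log_absolutely_monotonic (fun x => x < - alpha) (F alpha beta) <-> 2 * beta <= alpha) /\
     (log_absolutely_monotonic (fun x => x < - alpha) (fun x => / F alpha beta x)
        <-> alpha <= beta)).
Proof.
  split; [|split; [|split]].
  -
    intros Hn.
    assert (HU : open (fun x => - alpha < x)) by apply open_gt.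
    assert (Hd : forall x, - alpha < x -> 0 < x * (x + alpha)) by (intros; nra).
    split.
    + rewrite (char_CM_F _ HU alpha beta Hd). split.
      * intros H. destruct (Rle_dec beta alpha) as [|Hb]; auto. exfalso.
        destruct (lin_right (2 * beta - alpha) (alpha * beta) (- alpha)) as [x [Hx Hl]]; [nra|].
        assert (H2 := H 2%nat x ltac:(lia) Hx).
        assert (Hlt := Phi2_bad alpha beta x (Hd x Hx) ltac:(nra)). simpl in H2. lra.
      * intros Hb k x Hk Hx. destruct k as [|[|j]]; [lia| |].
        -- rewrite Phi1_a; [|auto]. destruct (dom_facts alpha x (Hd x Hx)) as [_ [_ Hy]].
           assert (H1 := ln_le_m1 _ Hy).
           assert (H2 : 0 <= alpha * (beta - alpha) / (x * (x + alpha))) by (apply divpos; [nra| auto]).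
           simpl. lra.
        -- rewrite CM_SS; [|auto]. apply sgn_pos; [|apply Ppos; auto].
           apply core_i; lra.
    + rewrite (char_CM_iF _ HU alpha beta Hd). split.
      * intros H. destruct (Rle_dec alpha (2 * beta)) as [|Hb]; auto. exfalso.
        destruct (lin_large (2 * beta - alpha) (alpha * beta) (- alpha)) as [x [Hx Hl]]; [lra|].
        assert (H2 := H 2%nat x ltac:(lia) Hx).
        assert (Hlt := Phi2_bad' alpha beta x (Hd x Hx) ltac:(nra)). simpl in H2. lra.
      * intros Hb k x Hk Hx. destruct k as [|[|j]]; [lia| |].
        -- rewrite Phi1_h; [|auto]. destruct (dom_facts alpha x (Hd x Hx)) as [_ [_ Hy]].
           assert (H1 := hh_le1 _ Hy (Rlt_le _ _ (y_lt1 alpha x (Hd x Hx) ltac:(nra)))).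
           assert (H2 : alpha * (beta - alpha / 2) / (x * (x + alpha)) <= 0) by (apply divneg; [nra| auto]).
           simpl. lra.
        -- rewrite Ropp_mult_distr_r_reverse, CM_SS; [|auto].
           assert (H := sgn_neg j (Qc (S j) (x + alpha) x beta) ((x * (x + alpha)) ^ S (S j))
             ltac:(apply core_ii; lra) (Ppos alpha x _ (Hd x Hx))). lra.
  -
    intros Hp.
    assert (HU : open (fun x => 0 < x)) by apply open_gt.
    assert (Hd : forall x, 0 < x -> 0 < x * (x + alpha)) by (intros; nra).
    split.
    + rewrite (char_CM_F _ HU alpha beta Hd). split.
      * intros H. destruct (Rle_dec alpha (2 * beta)) as [|Hb]; auto. exfalso.
        destruct (lin_large (2 * beta - alpha) (alpha * beta) 0) as [x [Hx Hl]]; [lra|].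
        assert (H2 := H 2%nat x ltac:(lia) Hx).
        assert (Hlt := Phi2_bad alpha beta x (Hd x Hx) ltac:(nra)). simpl in H2. lra.
      * intros Hb k x Hk Hx. destruct k as [|[|j]]; [lia| |].
        -- rewrite Phi1_h; [|auto].
           assert (H1 := hh_ge1 _ (Rlt_le _ _ (y_gt1 alpha x (Hd x Hx) ltac:(nra)))).
           assert (H2 : 0 <= alpha * (beta - alpha / 2) / (x * (x + alpha))) by (apply divpos; [nra| auto]).
           simpl. lra.
        -- rewrite CM_SS; [|auto]. apply sgn_pos; [|apply Ppos; auto].
           apply core_iii; lra.
    + rewrite (char_CM_iF _ HU alpha beta Hd). split.
      * intros H. destruct (Rle_dec beta 0) as [|Hb]; auto. exfalso.
        destruct (lin_right (2 * beta - alpha) (alpha * beta) 0) as [x [Hx Hl]]; [nra|].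
        assert (H2 := H 2%nat x ltac:(lia) Hx).
        assert (Hlt := Phi2_bad' alpha beta x (Hd x Hx) ltac:(nra)). simpl in H2. lra.
      * intros Hb k x Hk Hx. destruct k as [|[|j]]; [lia| |].
        -- rewrite Phi1_0; [|auto]. destruct (dom_facts alpha x (Hd x Hx)) as [_ [_ Hy]].
           assert (H1 := ln_ge_m1 _ Hy).
           assert (H2 : alpha * beta / (x * (x + alpha)) <= 0) by (apply divneg; [nra| auto]).
           simpl. lra.
        -- rewrite Ropp_mult_distr_r_reverse, CM_SS; [|auto].
           assert (H := sgn_neg j (Qc (S j) (x + alpha) x beta) ((x * (x + alpha)) ^ S (S j))
             ltac:(apply core_iv; lra) (Ppos alpha x _ (Hd x Hx))). lra.
  -
    intros Hn.
    assert (HU : open (fun x => x < 0)) by apply open_lt.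
    assert (Hd : forall x, x < 0 -> 0 < x * (x + alpha)) by (intros; nra).
    split.
    + rewrite (char_AM_F _ HU alpha beta Hd). split.
      * intros H. destruct (Rle_dec 0 beta) as [|Hb]; auto. exfalso.
        destruct (lin_left (2 * beta - alpha) (alpha * beta) 0) as [x [Hx Hl]]; [nra|].
        assert (H2 := H 2%nat x ltac:(lia) Hx).
        assert (Hlt := Phi2_bad alpha beta x (Hd x Hx) ltac:(nra)). lra.
      * intros Hb k x Hk Hx. destruct k as [|[|j]]; [lia| |].
        -- rewrite Phi1_0; [|auto]. destruct (dom_facts alpha x (Hd x Hx)) as [_ [_ Hy]].
           assert (H1 := ln_ge_m1 _ Hy).
           assert (H2 : alpha * beta / (x * (x + alpha)) <= 0) by (apply divneg; [nra| auto]).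
           lra.
        -- rewrite AM_SS; [|auto].
           assert (H := sgn_neg j (Qc (S j) (- (x + alpha)) (- x) (- beta)) ((x * (x + alpha)) ^ S (S j))
             ltac:(apply core_iv; lra) (Ppos alpha x _ (Hd x Hx))). lra.
    + rewrite (char_AM_iF _ HU alpha beta Hd). split.
      * intros H. destruct (Rle_dec (2 * beta) alpha) as [|Hb]; auto. exfalso.
        destruct (lin_small (2 * beta - alpha) (alpha * beta) 0) as [x [Hx Hl]]; [lra|].
        assert (H2 := H 2%nat x ltac:(lia) Hx).
        assert (Hlt := Phi2_bad' alpha beta x (Hd x Hx) ltac:(nra)). lra.
      * intros Hb k x Hk Hx. destruct k as [|[|j]]; [lia| |].
        -- rewrite Phi1_h; [|auto].
           assert (H1 := hh_ge1 _ (Rlt_le _ _ (y_gt1 alpha x (Hd x Hx) ltac:(nra)))).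
           assert (H2 : 0 <= alpha * (beta - alpha / 2) / (x * (x + alpha))) by (apply divpos; [nra| auto]).
           lra.
        -- rewrite AM_SS; [|auto].
           assert (H := sgn_pos j (Qc (S j) (- (x + alpha)) (- x) (- beta)) ((x * (x + alpha)) ^ S (S j))
             ltac:(apply core_iii; lra) (Ppos alpha x _ (Hd x Hx))). lra.
  -
    intros Hp.
    assert (HU : open (fun x => x < - alpha)) by apply open_lt.
    assert (Hd : forall x, x < - alpha -> 0 < x * (x + alpha)) by (intros; nra).
    split.
    + rewrite (char_AM_F _ HU alpha beta Hd). split.
      * intros H. destruct (Rle_dec (2 * beta) alpha) as [|Hb]; auto. exfalso.
        destruct (lin_small (2 * beta - alpha) (alpha * beta) (- alpha)) as [x [Hx Hl]]; [lra|].
        assert (H2 := H 2%nat x ltac:(lia) Hx).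
        assert (Hlt := Phi2_bad alpha beta x (Hd x Hx) ltac:(nra)). lra.
      * intros Hb k x Hk Hx. destruct k as [|[|j]]; [lia| |].
        -- rewrite Phi1_h; [|auto]. destruct (dom_facts alpha x (Hd x Hx)) as [_ [_ Hy]].
           assert (H1 := hh_le1 _ Hy (Rlt_le _ _ (y_lt1 alpha x (Hd x Hx) ltac:(nra)))).
           assert (H2 : alpha * (beta - alpha / 2) / (x * (x + alpha)) <= 0) by (apply divneg; [nra| auto]).
           lra.
        -- rewrite AM_SS; [|auto].
           assert (H := sgn_neg j (Qc (S j) (- (x + alpha)) (- x) (- beta)) ((x * (x + alpha)) ^ S (S j))
             ltac:(apply core_ii; lra) (Ppos alpha x _ (Hd x Hx))). lra.
    + rewrite (char_AM_iF _ HU alpha beta Hd). split.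
      * intros H. destruct (Rle_dec alpha beta) as [|Hb]; auto. exfalso.
        destruct (lin_left (2 * beta - alpha) (alpha * beta) (- alpha)) as [x [Hx Hl]]; [nra|].
        assert (H2 := H 2%nat x ltac:(lia) Hx).
        assert (Hlt := Phi2_bad' alpha beta x (Hd x Hx) ltac:(nra)). lra.
      * intros Hb k x Hk Hx. destruct k as [|[|j]]; [lia| |].
        -- rewrite Phi1_a; [|auto]. destruct (dom_facts alpha x (Hd x Hx)) as [_ [_ Hy]].
           assert (H1 := ln_le_m1 _ Hy).
           assert (H2 : 0 <= alpha * (beta - alpha) / (x * (x + alpha))) by (apply divpos; [nra| auto]).
           lra.
        -- rewrite AM_SS; [|auto].
           assert (H := sgn_pos j (Qc (S j) (- (x + alpha)) (- x) (- beta)) ((x * (x + alpha)) ^ S (S j))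
             ltac:(apply core_i; lra) (Ppos alpha x _ (Hd x Hx))). lra.
Qed.
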